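(* Let $k$ be a field, $M$ a regular matroid of rank $r$ on ground set $E=\{e_1,\ldots,e_n\}$ ordered by $e_1<\cdots<e_n$, with basis $B=\{e_{n-r+1},\ldots,e_n\}$, and let $\Theta^B=\{\theta_{e_j}: e_j\in B\}$ with $\theta_{e_j}=\sum_{e_i\in\mathrm{coc}(B,e_j)}a^*_{ji}x_i$ built from an admissible signed fundamental cocircuit incidence matrix $(a^*_{ji})$. For each circuit $C$ let $p_C\in k[x_1,\ldots,x_{n-r}]$ be the polynomial obtained from $\prod_{e_j\in\overline{C}}x_j$ by substituting, for each $j\ge n-r+1$, $x_j=-(a^*_{jj})^{-1}\sum_{e_i\in\mathrm{coc}(B,e_j),\,i\neq j}a^*_{ji}x_i$, and let $J(\Delta_{\mathrm{BC}}(M))=\langle p_C : C \text{ a circuit of } M\rangle\subseteq k[x_1,\ldots,x_{n-r}]$. Then, identifying $k[x_1,\ldots,x_n]/(\Theta^B)$ with $k[x_1,\ldots,x_{n-r}]$ via this substitution, $I_{\Delta_{\mathrm{BC}}(M)}+(\Theta^B)$ corresponds to $J(\Delta_{\mathrm{BC}}(M))$; in particular $$k[\Delta_{\mathrm{BC}}(M)]/(\Theta^B)\cong k[x_1,\ldots,x_{n-r}]/J(\Delta_{\mathrm{BC}}(M)).$$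
   Context: $\mathrm{coc}(B,b)$ for $b\in B$ is the unique cocircuit of $M$ contained in $(E\setminus B)\cup\{b\}$ and containing $b$; for $j\ge n-r+1$ one has $\mathrm{coc}(B,e_j)\setminus\{e_j\}\subseteq\{e_1,\ldots,e_{n-r}\}$. The fundamental cocircuit incidence matrix has rows indexed by the fundamental cocircuits $\mathrm{coc}(B,e_j)$, columns by $e_1,\ldots,e_n$, entry $1$ if $e_i\in\mathrm{coc}(B,e_j)$, else $0$. A signing replaces some $1$'s by $-1$; it is admissible over $k$ if it is the restriction to these rows of a signing of the full cocircuit incidence matrix (rows = all cocircuits) for which some signing of the circuit incidence matrix (rows = all circuits) satisfies $\widetilde{\mathcal{A}}_M(\mathcal{C})\widetilde{\mathcal{A}}_M(\mathcal{C}^* )^T=0$ over $k$. For a circuit $C$, $\overline{C}=C\setminus\{\min C\}$ is its broken circuit; $\Delta_{\mathrm{BC}}(M)$ is the complex of sets containing no broken circuit, and its Stanley–Reisner ideal is $I_{\Delta_{\mathrm{BC}}(M)}=\langle\prod_{e_i\in\overline{C}}x_i : C\text{ a circuit}\rangle\subseteq k[x_1,\ldots,x_n]$. *)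

(* Defs.v *)
From HB Require Import structures.
From mathcomp Require Import all_boot all_order all_algebra.
From mathcomp Require Import mpoly.

Set Implicit Arguments.
Unset Strict Implicit.
Unset Printing Implicit Defensive.

Import Order.TTheory GRing.Theory Num.Theory.
Local Open Scope ring_scope.

(* Ground set E = {e_1,...,e_n} is modelled by 'I_n, e_i <-> index i-1,
   with the natural order of 'I_n giving e_1 < ... < e_n. *)

Record matroid (n : nat) := Matroid {
  indep : {set 'I_n} -> bool;
  indep0 : indep set0;
  indep_sub : forall X Y : {set 'I_n}, X \subset Y -> indep Y -> indep X;
  indep_aug : forall X Y : {set 'I_n}, indep X -> indep Y -> (#|X| < #|Y|)%N ->
     exists2 y, y \in Y :\: X & indep (y |: X)
}.

Section MatroidNotions.
Variables (n : nat) (M : matroid n).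

Definition is_basis (B : {set 'I_n}) : Prop :=
  indep M B /\ forall X : {set 'I_n}, B \proper X -> ~~ indep M X.

Definition is_circuit (C : {set 'I_n}) : bool :=
  ~~ indep M C && [forall X : {set 'I_n}, (X \proper C) ==> indep M X].

Definition dual_indep (X : {set 'I_n}) : bool :=
  [exists B : {set 'I_n}, [&& indep M B,
     [forall Y : {set 'I_n}, (B \proper Y) ==> ~~ indep M Y] & X \subset ~: B]].

Definition is_cocircuit (D : {set 'I_n}) : bool :=
  ~~ dual_indep D && [forall X : {set 'I_n}, (X \proper D) ==> dual_indep X].

(* coc(B,b): the (unique, when B is a basis and b \in B) cocircuit contained
   in (E \ B) u {b} and containing b. *)
Definition coc (B : {set 'I_n}) (b : 'I_n) : {set 'I_n} :=
  odflt set0 [pick D : {set 'I_n} |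
     [&& is_cocircuit D, D \subset (~: B) :|: [set b] & b \in D]].

(* broken circuit: C minus its minimal element (w.r.t. the order of 'I_n) *)
Definition broken (C : {set 'I_n}) : {set 'I_n} :=
  [set i in C | [exists j in C, (j < i)%N]].

End MatroidNotions.

Definition represents (F : fieldType) (n d : nat) (M : matroid n)
    (A : 'M[F]_(n, d)) : Prop :=
  forall X : {set 'I_n},
    indep M X = row_free (rowsub (fun i : 'I_#|X| => @enum_val _ (mem X) i) A).

Definition regular (n : nat) (M : matroid n) : Prop :=
  forall F : fieldType, exists d (A : 'M[F]_(n, d)), represents M A.

Definition is_signing (n : nat) (S : pred {set 'I_n})
    (t : {set 'I_n} -> 'I_n -> int) : Prop :=
  forall D, S D -> forall i,
    if i \in D then (t D i == 1) || (t D i == -1) else t D i == 0.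

(* The signed fundamental cocircuit incidence matrix a (rows j \in B give
   coc(B,e_j)) is admissible over k: it is the restriction of a signing t of the
   full cocircuit incidence matrix for which some signing s of the circuit
   incidence matrix satisfies  s * t^T = 0  over k. *)
Definition admissible (k : fieldType) (n : nat) (M : matroid n)
    (B : {set 'I_n}) (a : 'I_n -> 'I_n -> int) : Prop :=
  exists s t : {set 'I_n} -> 'I_n -> int,
    [/\ is_signing (is_circuit M) s,
        is_signing (is_cocircuit M) t,
        (forall C D, is_circuit M C -> is_cocircuit M D ->
            \sum_(i < n) ((s C i)%:~R * (t D i)%:~R) = 0 :> k) &
        (forall j, j \in B -> forall i, a j i = t (coc M B j) i)].

Definition in_ideal (R : comRingType) (G : R -> Prop) (p : R) : Prop :=
  exists l : seq (R * R), (forall q, q \in l -> G q.2) /\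
    p = \sum_(q <- l) q.1 * q.2.

Section Objects.
Variables (k : fieldType) (n r : nat) (M : matroid n) (a : 'I_n -> 'I_n -> int).

Definition Bset : {set 'I_n} := [set i : 'I_n | n - r <= i]%N.

Definition theta (j : 'I_n) : {mpoly k[n]} :=
  \sum_(i in coc M Bset j) (a j i)%:~R *: 'X_i.

Definition ThetaB (p : {mpoly k[n]}) : Prop := exists2 j, j \in Bset & p = theta j.

Definition SRgen (p : {mpoly k[n]}) : Prop :=
  exists2 C, is_circuit M C & p = \prod_(i in broken C) 'X_i.

Definition low_var (i : 'I_n) : {mpoly k[n - r]} :=
  oapp (fun i' : 'I_(n - r) => 'X_i') 0 (insub (val i)).

Definition subst_val (j : 'I_n) : {mpoly k[n - r]} :=
  if (j < n - r)%N then low_var j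
  else - ((a j j)%:~R)^-1 *:
         \sum_(i in coc M Bset j | i != j) (a j i)%:~R *: low_var i.

Definition phi (p : {mpoly k[n]}) : {mpoly k[n - r]} :=
  mmap (@mpolyC _ k) subst_val p.

Definition Jgen (q : {mpoly k[n - r]}) : Prop :=
  exists2 C, is_circuit M C & q = phi (\prod_(i in broken C) 'X_i).

End Objects.

(* Main.v *)
Require Import Defs.
From HB Require Import structures.
From mathcomp Require Import all_boot all_order all_algebra.
From mathcomp Require Import mpoly ring.
Set Implicit Arguments.
Unset Strict Implicit.
Unset Printing Implicit Defensive.
Import Order.TTheory GRing.Theory Num.Theory.
Local Open Scope ring_scope.
Lemma coc_spec (n : nat) (M : matroid n) (B : {set 'I_n}) j :
  is_basis M B -> j \in B ->
  [&& is_cocircuit M (coc M B j), coc M B j \subset ~: B :|: [set j]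
    & j \in coc M B j].
Proof.
move=> [iB maxB] jB.
rewrite /coc; case: pickP => [D -> //|none]; exfalso.
pose S := ~: B :|: [set j].
pose P := fun D : {set 'I_n} => (D \subset S) && ~~ dual_indep M D.
have PS : P S.
  rewrite /P subxx /=; apply/negP => /existsP [B' /and3P [iB' /forallP mB' sub]].
  have B'B : B' \proper B.
    apply/properP; split; last first.
      exists j => //; apply/negP => jB'.
      by move/subsetP: sub => /(_ j); rewrite !inE eqxx orbT jB' => /(_ isT).
    apply/subsetP => x xB'; move/subsetP: sub => /(_ x).
    case: (boolP (x \in B)) => // xB; rewrite /S !inE xB /= => /(_ isT).
    by rewrite xB'.
  by move: (mB' B); rewrite B'B iB.
have [D] := ex_minset (ex_intro _ S PS).
move/minsetP => [/andP [DS nDi] minD].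
move: (none D) => /negP; apply.
have jD : j \in D.
  apply/negPn/negP => njD; move/negP: nDi; apply.
  apply/existsP; exists B; rewrite iB /=; apply/andP; split.
    by apply/forallP => Y; apply/implyP => /maxB.
  apply/subsetP => x xD; move/subsetP: DS => /(_ x xD); rewrite !inE.
  by case/orP => // /eqP exj; rewrite -exj xD in njD.
apply/and3P; split => //.
rewrite /is_cocircuit nDi /=.
apply/forallP => X; apply/implyP => XD; apply: contraT => nX.
have PX : P X by rewrite /P nX andbT (subset_trans (proper_sub XD) DS).
have := minD X PX (proper_sub XD) => eXD.
by rewrite eXD properxx in XD.
Qed.

Section Ideal.
Variables (R : comRingType) (G : R -> Prop).

Lemma ideal0 : in_ideal G 0.
Proof. by exists [::]; split => //; rewrite big_nil. Qed.

Lemma idealD p q : in_ideal G p -> in_ideal G q -> in_ideal G (p + q).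
Proof.
move=> [l1 [h1 ->]] [l2 [h2 ->]]; exists (l1 ++ l2); split; last by rewrite big_cat.
by move=> x; rewrite mem_cat => /orP [/h1|/h2].
Qed.

Lemma idealMl y p : in_ideal G p -> in_ideal G (y * p).
Proof.
move=> [l [h ->]]; exists [seq (y * q.1, q.2) | q <- l]; split.
  by move=> x /mapP [q ql ->] /=; apply: h.
by rewrite big_map mulr_sumr; apply: eq_bigr => q _; rewrite mulrA.
Qed.

Lemma idealMr y p : in_ideal G p -> in_ideal G (p * y).
Proof. by rewrite mulrC; apply: idealMl. Qed.

Lemma idealN p : in_ideal G p -> in_ideal G (- p).
Proof. by move=> h; rewrite -mulN1r; apply: idealMl. Qed.

Lemma idealB p q : in_ideal G p -> in_ideal G q -> in_ideal G (p - q).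
Proof. by move=> hp hq; apply: idealD => //; apply: idealN. Qed.

Lemma ideal_gen g : G g -> in_ideal G g.
Proof.
move=> hg; exists [:: (1, g)]; split; first by move=> x; rewrite inE => /eqP -> .
by rewrite big_seq1 mul1r.
Qed.

End Ideal.

Lemma ideal_mono (R : comRingType) (G G' : R -> Prop) p :
  (forall g, G g -> G' g) -> in_ideal G p -> in_ideal G' p.
Proof.
move=> hGG [l [h ->]]; exists l; split => // q /h; exact: hGG.
Qed.

Lemma ideal_morph (R S : comRingType) (G : R -> Prop) (G' : S -> Prop)
  (f : R -> S) p :
  f 0 = 0 -> (forall x y, f (x + y) = f x + f y) ->
  (forall x y, f (x * y) = f x * f y) ->
  (forall g, G g -> in_ideal G' (f g)) ->
  in_ideal G p -> in_ideal G' (f p).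
Proof.
move=> f0 fD fM hG [l [h ->]]; elim: l h => [|q l IH] h.
  by rewrite big_nil f0; apply: ideal0.
rewrite big_cons fD fM; apply: idealD.
  by apply: idealMl; apply: hG; apply: h; rewrite inE eqxx.
by apply: IH => x xl; apply: h; rewrite inE xl orbT.
Qed.

Lemma congr_gen (k : fieldType) (m : nat) (I : {mpoly k[m]} -> Prop)
    (F : {mpoly k[m]} -> {mpoly k[m]}) :
  I 0 -> (forall u v, I u -> I v -> I (u + v)) ->
  (forall u y, I u -> I (u * y)) ->
  (forall x y, F (x + y) = F x + F y) -> (forall x y, F (x * y) = F x * F y) ->
  F 1 = 1 ->
  (forall c, I (c%:MP - F c%:MP)) -> (forall i, I ('X_i - F 'X_i)) ->
  forall p, I (p - F p).
Proof.
move=> I0 ID IM FD FM F1 IC IX.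
have IMM x y : I (x - F x) -> I (y - F y) -> I (x * y - F (x * y)).
  move=> hx hy; rewrite FM.
  have -> : x * y - F x * F y = (x - F x) * y + (y - F y) * F x.
    by ring.
  by apply: ID; apply: IM.
have I1 : I (1 - F 1) by rewrite F1 subrr.
elim/mpolyind => [|c mm p _ _ hp].
  have F0 : F 0 = 0.
    by apply: (@addrI _ (F 0)); rewrite -FD !addr0.
  by rewrite F0 subrr.
have -> : c *: 'X_[mm] + p - F (c *: 'X_[mm] + p)
   = (c *: 'X_[mm] - F (c *: 'X_[mm])) + (p - F p).
  by rewrite FD opprD !addrA; congr (_ + _); rewrite addrAC.
apply: (ID) => //.
rewrite -mul_mpolyC; apply: (IMM) => //.
rewrite mpolyXE_id; apply: (big_ind (fun x => I (x - F x))) => //.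
move=> i _; elim: (mm i) => [|e IH]; first by rewrite expr0.
by rewrite exprS; apply: (IMM).
Qed.

Section S.
Variables (k : fieldType) (n r : nat) (M : matroid n) (a : 'I_n -> 'I_n -> int).
Local Notation Phi := (@phi k n r M a).
Definition Lf : {mpoly k[n - r]} -> {mpoly k[n]} :=
  mmap (@mpolyC _ k) (fun i : 'I_(n - r) => 'X_(widen_ord (leq_subr r n) i)).
Lemma phiX i : Phi 'X_i = @subst_val k n r M a i.
Proof. by rewrite /phi mmapX mmap1U. Qed.
Lemma phiZ c p : Phi (c *: p) = c *: Phi p.
Proof. by rewrite /phi mmapZ mul_mpolyC. Qed.
Lemma phiD x y : Phi (x + y) = Phi x + Phi y.
Proof. by rewrite /phi rmorphD. Qed.
Lemma phiM x y : Phi (x * y) = Phi x * Phi y.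
Proof. by rewrite /phi rmorphM. Qed.
Lemma phi1 : Phi 1 = 1.
Proof. by rewrite /phi rmorph1. Qed.
Lemma phiC c : Phi c%:MP = c%:MP.
Proof. by rewrite /phi mmapC. Qed.
Lemma phi0 : Phi 0 = 0.
Proof. by rewrite /phi rmorph0. Qed.
Lemma phi_sum (I : finType) (P : pred I) F : Phi (\sum_(i | P i) F i) = \sum_(i | P i) Phi (F i).
Proof. by rewrite /phi raddf_sum. Qed.
Lemma LfX i : Lf 'X_i = 'X_(widen_ord (leq_subr r n) i).
Proof. by rewrite /Lf mmapX mmap1U. Qed.
Lemma LfZ c p : Lf (c *: p) = c *: Lf p.
Proof. by rewrite /Lf mmapZ mul_mpolyC. Qed.
Lemma LfD x y : Lf (x + y) = Lf x + Lf y.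
Proof. by rewrite /Lf rmorphD. Qed.
Lemma LfM x y : Lf (x * y) = Lf x * Lf y.
Proof. by rewrite /Lf rmorphM. Qed.
Lemma Lf1 : Lf 1 = 1.
Proof. by rewrite /Lf rmorph1. Qed.
Lemma LfC c : Lf c%:MP = c%:MP.
Proof. by rewrite /Lf mmapC. Qed.
Lemma Lf0 : Lf 0 = 0.
Proof. by rewrite /Lf rmorph0. Qed.
Lemma Lf_sum (I : finType) (P : pred I) F : Lf (\sum_(i | P i) F i) = \sum_(i | P i) Lf (F i).
Proof. by rewrite /Lf raddf_sum. Qed.

Lemma low_varE (i : 'I_n) (h : (i < n - r)%N) : @low_var k n r i = 'X_(Ordinal h).
Proof. by rewrite /low_var insubT. Qed.

Lemma Lf_low (i : 'I_n) : (i < n - r)%N -> Lf (@low_var k n r i) = 'X_i.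
Proof.
move=> h; rewrite (low_varE h) LfX; congr 'X_(_); exact: val_inj.
Qed.

Lemma subst_low (i : 'I_n) : (i < n - r)%N -> @subst_val k n r M a i = @low_var k n r i.
Proof. by move=> h; rewrite /subst_val h. Qed.

Lemma phiLf q : Phi (Lf q) = q.
Proof.
suff : q - Phi (Lf q) = 0 by move/eqP; rewrite subr_eq0 => /eqP.
apply: (@congr_gen k (n - r) (fun u => u = 0) (fun q => Phi (Lf q))) => //.
- by move=> u v -> ->; rewrite addr0.
- by move=> u y ->; rewrite mul0r.
- by move=> x y; rewrite LfD phiD.
- by move=> x y; rewrite LfM phiM.
- by rewrite Lf1 phi1.
- by move=> c; rewrite LfC phiC subrr.
- move=> i; have hi : (widen_ord (leq_subr r n) i < n - r)%N by exact: ltn_ord i.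
  rewrite LfX phiX subst_low // (low_varE hi).
  have -> : Ordinal hi = i by apply: val_inj.
  by rewrite subrr.
Qed.

Hypothesis hB : is_basis M (Bset n r).
Hypothesis hadm : admissible k M (Bset n r) a.

Lemma Bfacts j : j \in Bset n r ->
  [/\ (a j j)%:~R != 0 :> k,
      forall i, i \in coc M (Bset n r) j -> i != j -> (i < n - r)%N &
      j \in coc M (Bset n r) j].
Proof.
move=> jB; have /and3P [cc sub jin] := coc_spec hB jB.
case: hadm => s [t [_ tsig _ ha]].
split => //.
  rewrite ha //; have := tsig _ cc j; rewrite jin => /orP [/eqP->|/eqP->].
    by rewrite oner_neq0.
  by rewrite rmorphN rmorph1 oppr_eq0 oner_neq0.
move=> i ic ij; move/subsetP: sub => /(_ i ic); rewrite !inE (negbTE ij) orbF.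
by rewrite -ltnNge.
Qed.

Lemma phi_theta j : j \in Bset n r -> Phi (@theta k n r M a j) = 0.
Proof.
move=> jB; have [ajj low jin] := Bfacts jB.
have jge : (n - r <= j)%N by move: jB; rewrite inE.
rewrite /theta phi_sum (bigD1 j) //= phiZ phiX.
rewrite /subst_val ltnNge jge /=.
rewrite scalerA mulrN mulfV // scaleN1r addrC; apply/eqP; rewrite subr_eq0; apply/eqP.
by apply: eq_bigr => i /andP [ic ij]; rewrite phiZ phiX subst_low // low.
Qed.

Lemma congr_theta p : in_ideal (@ThetaB k n r M a) (p - Lf (Phi p)).
Proof.
apply: (@congr_gen k n _ (fun p => Lf (Phi p))).
- exact: ideal0.
- by move=> u v; apply: idealD.
- by move=> u y; apply: idealMr.
- by move=> x y; rewrite phiD LfD.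
- by move=> x y; rewrite phiM LfM.
- by rewrite phi1 Lf1.
- by move=> c; rewrite phiC LfC subrr; apply: ideal0.
move=> j; rewrite phiX.
case: (ltnP j (n - r)) => hj.
  by rewrite subst_low // Lf_low // subrr; apply: ideal0.
have jB : j \in Bset n r by rewrite inE.
have [ajj low jin] := Bfacts jB.
have -> : 'X_j - Lf (@subst_val k n r M a j) = ((a j j)%:~R^-1)%:MP * @theta k n r M a j.
  rewrite /subst_val ltnNge hj /= LfZ Lf_sum /theta [in RHS](bigD1 j) //=.
  rewrite [in LHS](eq_bigr (fun i => (a j i)%:~R *: 'X_i)); last first.
    by move=> i /andP [ic ij]; rewrite LfZ Lf_low // low.
  by rewrite mul_mpolyC scalerDr scalerA mulVf // scale1r scaleNr opprK.
by apply: idealMl; apply: ideal_gen; exists j.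
Qed.

End S.

Lemma ideal_zero (R : comRingType) (y : R) : in_ideal (fun x : R => x = 0) y -> y = 0.
Proof.
move=> [l [h ->]]; rewrite big_seq big1 // => q /h ->; exact: mulr0.
Qed.



Theorem proposition4p1 (k : fieldType) (n r : nat) (M : matroid n)
    (a : 'I_n -> 'I_n -> int) :
  regular M ->
  (r <= n)%N ->
  is_basis M (Bset n r) ->
  admissible k M (Bset n r) a ->
  (* the substitution identifies k[x_1..x_n]/(Theta^B) with k[x_1..x_{n-r}] *)
  (forall q : {mpoly k[n - r]}, exists p : {mpoly k[n]}, @phi k n r M a p = q) /\
  (forall p : {mpoly k[n]},
      @phi k n r M a p = 0 <-> in_ideal (@ThetaB k n r M a) p) /\
  (* under it, I_{Delta_BC(M)} + (Theta^B) corresponds to J(Delta_BC(M)),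
     i.e. k[Delta_BC(M)]/(Theta^B) = k[x]/(I + Theta) ~= k[x_1..x_{n-r}]/J *)
  (forall p : {mpoly k[n]},
      in_ideal (fun g => @SRgen k n M g \/ @ThetaB k n r M a g) p <->
      in_ideal (@Jgen k n r M a) (@phi k n r M a p)).
Proof.
move=> _ _ hB hadm.
split; first by move=> q; exists (@Lf k n r q); rewrite phiLf.
split => p; split => h.
- by have := congr_theta hB hadm p; rewrite h Lf0 subr0.
- apply: ideal_zero; apply: (ideal_morph (f := @phi k n r M a)) h.
  + exact: phi0.
  + exact: phiD.
  + exact: phiM.
  + by move=> g [j jB ->]; rewrite (phi_theta hB hadm) //; apply: ideal0.
- apply: (ideal_morph (f := @phi k n r M a)) h.
  + exact: phi0.
  + exact: phiD.
  + exact: phiM.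
  + move=> g [[C hC ->]|[j jB ->]].
      by apply: ideal_gen; exists C.
    by rewrite (phi_theta hB hadm) //; apply: ideal0.
- rewrite -[p](subrK (@Lf k n r (@phi k n r M a p))); apply: idealD.
    by apply: ideal_mono (congr_theta hB hadm p) => g; right.
  apply: (ideal_morph (f := @Lf k n r)) h.
  + exact: Lf0.
  + exact: LfD.
  + exact: LfM.
  + move=> g [C hC ->].
    set P := \prod_(i in broken C) 'X_i.
    rewrite -(subrK P (@Lf k n r (@phi k n r M a P))); apply: idealD.
      rewrite -opprB; apply: idealN.
      by apply: ideal_mono (congr_theta hB hadm P) => g'; right.
    by apply: ideal_gen; left; exists C.
Qed.
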